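(* Let $m>1$ and $a\in\mathbb{Z}_m$ with $2a^2-2a+1\equiv0\pmod m$, and let $(\mathbb{Z}_m,\cdot)$ be the quadratical quasigroup $x\cdot y=ax+(1-a)y\pmod m$. Then there is exactly one $k\in\{1,\dots,m-1\}$ such that $(\mathbb{Z}_m,\cdot)$ is $k$-translatable with respect to the ordering $0,1,\dots,m-1$; this $k$ is the solution of $(a-1)k\equiv a\pmod m$, and it satisfies $1<k<m-1$.
   Context: Every quadratical quasigroup induced by the additive group $\mathbb{Z}_m$ has this form. A finite groupoid with ordering $q_1,\dots,q_n$ is $k$-translatable ($1\le k<n$) with respect to this ordering if $q_i\cdot q_j=q_{i-1}\cdot q_{j-k}$ for all $i\in\{2,\dots,n\}$, $j\in\{1,\dots,n\}$, indices taken modulo $n$ in $\{1,\dots,n\}$. *)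

(* Defs.v *)
(* all arithmetic in int, residues mod m represented by
   their canonical representatives in [0, m). *)
From mathcomp Require Import all_boot all_order all_algebra.
Set Implicit Arguments. Unset Strict Implicit. Unset Printing Implicit Defensive.
Import Order.TTheory GRing.Theory Num.Theory.
Local Open Scope ring_scope.

Definition zop (m : nat) (a : int) (x y : int) : int :=
  ((a * x + (1 - a) * y) %% (m%:Z))%Z.

Definition idxmod (n : nat) (i : int) : int := ((i - 1) %% (n%:Z))%Z + 1.

Definition k_translatable (T : Type) (n : nat) (mul : T -> T -> T)
    (q : int -> T) (k : int) : Prop :=
  forall i j : int, 2 <= i <= n%:Z -> 1 <= j <= n%:Z ->
    mul (q i) (q j) = mul (q (idxmod n (i - 1))) (q (idxmod n (j - k))).

Definition natural_order (i : int) : int := i - 1.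

(* Main.v *)
Require Import Defs.
From mathcomp Require Import all_boot all_order all_algebra.
From mathcomp Require Import ring lra zify.
Import Order.TTheory GRing.Theory Num.Theory.
Local Open Scope ring_scope.

Lemma dvd_lin (d x y c1 c2 z : int) :
  (d %| x)%Z -> (d %| y)%Z -> z = c1 * x + c2 * y -> (d %| z)%Z.
Proof. by move=> hx hy ->; apply: rpredD; apply: dvdz_mull. Qed.

Lemma dvd_sub_mod (M x : int) : (M %| x - (x %% M)%Z)%Z.
Proof.
have -> : x - (x %% M)%Z = (x %/ M)%Z * M.
  by rewrite {1}(divz_eq x M); ring.
by apply: dvdz_mull; apply: dvdzz.
Qed.

Lemma eqmodP (M x y : int) : (x %% M = y %% M)%Z <-> (M %| x - y)%Z.
Proof.
by split => [/eqP|h]; rewrite ?eqz_mod_dvd //; apply/eqP; rewrite eqz_mod_dvd.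
Qed.

Lemma small_eq (M x y : int) : 0 <= x < M -> 0 <= y < M -> (M %| x - y)%Z -> x = y.
Proof.
move=> hx hy /eqmodP; by rewrite !modz_small.
Qed.

Lemma trans_iff (m : nat) (a k : int) : (1 < m)%N ->
  k_translatable m (zop m a) natural_order k <-> (m%:Z %| (a - 1) * k - a)%Z.
Proof.
move=> hm; set M := m%:Z.
have key : forall i j : int,
  (zop m a (natural_order i) (natural_order j) =
   zop m a (natural_order (idxmod m (i - 1))) (natural_order (idxmod m (j - k))))
  <-> (M %| (a - 1) * k - a)%Z.
  move=> i j; rewrite /zop /natural_order /idxmod -/M eqmodP.
  set r1 := ((i - 1 - 1) %% M)%Z; set r2 := ((j - k - 1) %% M)%Z.
  have d1 : (M %| (i - 1 - 1) - r1)%Z by apply: dvd_sub_mod.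
  have d2 : (M %| (j - k - 1) - r2)%Z by apply: dvd_sub_mod.
  split => h.
  - apply: (@dvd_lin _ ( a * (i - 1) + (1 - a) * (j - 1) -
          (a * (r1 + 1 - 1) + (1 - a) * (r2 + 1 - 1)))
        ( a * ((i - 1 - 1) - r1) + (1 - a) * ((j - k - 1) - r2)) ( -1) ( 1)) => //.
      by apply: rpredD; apply: dvdz_mull.
    ring.
  - apply: (@dvd_lin _ ( (a - 1) * k - a)
        ( a * ((i - 1 - 1) - r1) + (1 - a) * ((j - k - 1) - r2)) ( -1) ( 1)) => //.
      by apply: rpredD; apply: dvdz_mull.
    ring.
split => [H|H i j _ _].
- apply/(key 2 1)/H; apply/andP; split => //; rewrite /M; lia.
- by apply/key.
Qed.

Theorem theorem9p3 (m : nat) (a : int) :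
  (1 < m)%N -> 0 <= a < m%:Z ->
  (2 * a ^+ 2 - 2 * a + 1 = 0 %[mod m%:Z])%Z ->
  exists k : int,
    [/\ 1 <= k <= m%:Z - 1 /\ 1 < k < m%:Z - 1,
        k_translatable m (zop m a) natural_order k,
        (forall k' : int, 1 <= k' <= m%:Z - 1 ->
           k_translatable m (zop m a) natural_order k' -> k' = k),
        ((a - 1) * k = a %[mod m%:Z])%Z
      & (forall k' : int, 1 <= k' <= m%:Z - 1 ->
           ((a - 1) * k' = a %[mod m%:Z])%Z -> k' = k)].
Proof.
move=> hm ha hP.
set M := m%:Z.
have M1 : 1 < M by rewrite /M; lia.
have dP : (M %| 2 * a ^+ 2 - 2 * a + 1)%Z.
  by move/eqmodP: hP; rewrite subr0.
have no1 : ~~ (M %| 1)%Z.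
  by rewrite dvdz1 /M absz_nat; apply/negP => /eqP h; lia.
set u := 1 - 2 * a.
set k := (u %% M)%Z.
have du : (M %| u - k)%Z by apply: dvd_sub_mod.
have k0 : 0 <= k by apply: modz_ge0; rewrite /M; lia.
have kM : k < M by apply: ltz_pmod; lia.
have sol : (M %| (a - 1) * k - a)%Z.
  apply: (@dvd_lin _ ( 2 * a ^+ 2 - 2 * a + 1) ( u - k) ( -1) ( -(a - 1))) => //.
  rewrite /u; ring.
have uniq : forall k', 0 <= k' < M -> (M %| (a - 1) * k' - a)%Z -> k' = k.
  move=> k' hk' dk'; have hk : 0 <= k < M by rewrite k0 kM.
  apply: (@small_eq M k' k hk' hk).
  apply: (@dvd_lin _ ( 2 * a ^+ 2 - 2 * a + 1) ( ((a - 1) * k' - a) - ((a - 1) * k - a))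
           ( k' - k) ( -2 * a)); first done.
    by apply: rpredB.
  ring.
have kn0 : k != 0.
  apply/eqP => e; move: du; rewrite e subr0 => du'.
  move/negP: no1; apply; apply: (@dvd_lin _ ( 2 * a ^+ 2 - 2 * a + 1) ( u) ( 2) ( 2 * a - 1)) => //.
  rewrite /u; ring.
have kn1 : k != 1.
  apply/eqP => e; move: du; rewrite e => du'.
  move/negP: no1; apply; apply: (@dvd_lin _ ( 2 * a ^+ 2 - 2 * a + 1) ( u - 1) ( 1) ( a - 1)) => //.
  rewrite /u; ring.
have knM : k != M - 1.
  apply/eqP => e; move: du; rewrite e => du'.
  have du2 : (M %| u + 1)%Z.
    apply: (@dvd_lin _ ( u - (M - 1)) ( M) ( 1) ( 1)) => //; try exact: dvdzz; ring.
  move/negP: no1; apply; apply: (@dvd_lin _ ( 2 * a ^+ 2 - 2 * a + 1) ( u + 1) ( 1) ( a)) => //.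
  rewrite /u; ring.
have rng : 1 < k < M - 1.
  move: k0 kM kn0 kn1 knM; lia.
exists k; split.
- split => //; move: rng; lia.
- by apply/(trans_iff _ _ _ hm).
- move=> k' hk' /(trans_iff _ _ _ hm) dk'; apply: uniq => //; move: hk'; lia.
- by apply/eqmodP.
- move=> k' hk' /eqmodP dk'; apply: uniq => //; move: hk'; lia.
Qed.
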